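(* In the setting described in the context, for every $(u_1,\dots,u_n)\in\widetilde C(U,W,\alpha)$ we have $u_i(p_j)=j$ for all $1\le j<i\le n$. In particular $\mathrm{fix}_{(\alpha_i,n]}(u_i,u_{i+1})\cap[a,i]\subseteq[a,0]$ for every $i\in[n-1]$, and hence $\widetilde{\mathrm{wt}}^n_\alpha(u_1,\dots,u_n)(y_1,\dots,y_{n-1};\mathbf y)$ is a product of pairwise distinct factors $(y_i-y_j)$ with $i\in[n-1]$ and $j\in[a,0]$.
   Context: Permutations: for integers $a\le n$, $S_{[a,n]}$ is the set of bijections of $\mathbb Z$ fixing every integer outside $[a,n]$, one-line notation $[w(a),\dots,w(n)]$; $\tau_{i,j}$ swaps $i<j$, $u\tau_{i,j}=u\circ\tau_{i,j}$; $\ell(u)$ = number of inversions; $u\lessdot_k u\tau_{i,j}$ if $i\le k<j$ and $\ell(u\tau_{i,j})=\ell(u)+1$; $u\xrightarrow{k}w$ if there is a chain $u=v_1\lessdot_k\cdots\lessdot_k v_s=w$ ($s\ge1$), $v_{t+1}=v_t\tau_{i_t,j_t}$, with $v_1(i_1)<\cdots<v_{s-1}(i_{s-1})$. $\mathrm{fix}_I(u,v)=\{u(t):t\in I,\ u(t)=v(t)\}$. For $\beta=(\beta_1,\dots,\beta_m)$, $C(u,w,\beta)$ is the set of $(v_1,\dots,v_{m+1})$ with $v_1=u$, $v_{m+1}=w$, $v_i\xrightarrow{\beta_i}v_{i+1}$. Setting: fix $a\le0<n$ and $A=\{(r,c):1\le r\le n,\ a\le c\le r\}$. Let $\gamma=(\gamma_N,\gamma_E,\gamma_S,\gamma_W)$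 be a boundary condition of $A$: $\gamma_N(c)$ ($c\in[a,n]$) is the label of the pipe entering through the top edge of the top cell $(\max(c,1),c)$ of column $c$ or $\varnothing$; $\gamma_E(r)$ that of the pipe entering through the right edge of $(r,r)$ or $\varnothing$; $\gamma_S(c)$ that of the pipe exiting through the bottom edge of $(n,c)$ or $\varnothing$; $\gamma_W(r)$ that of the pipe exiting through the left edge of $(r,a)$ or $\varnothing$. Assume $\gamma_S(c)\neq\varnothing$ for $c\in[a,n]$, $\gamma_W(r)=\varnothing$ and $\gamma_N(r)\ne\varnothing$ for $r\in[n]$, and the non-$\varnothing$ values of $\gamma_N,\gamma_E$ are exactly $a,\dots,n$, increasing along the order: top edges of columns $a,\dots,1$, right edge of row 1, top edge of column 2, right edge of row 2, …, top edge of column $n$, right edge of row $n$ (the values of $\gamma_S$ are then also exactly $a,\dots,n$). Put $p_c=\gamma_N(c)$ ($c\in[n]$), $\alpha_i=p_{i+1}-1$, $\alpha=(\alpha_1,\dots,\alpha_{n-1})$. $P_r=\{w\in S_{[a,n]}:w(p_j)=j\ \forall j\in(r,n]\}$; $\iota_r:P_r\to S_{[a,r]}$ deletes the values $r+1,\dots,n$ from one-line notation. $W\in P_1$: $\iota_1(W)(\ell)=\gamma_N^{-1}(\ell)$ for $\ell\in[a,p_1]$ and $\iota_1(W)$ decreasing on $(p_1,1]$. $U\in S_{[a,n]}$: $U(\ell)=\gamma_S^{-1}(\ell)$ for $\ell\in[a,n]$. $\widetilde C(U,W,\alpha)$ is the set of $(u_1,\dots,u_n)\in C(U,W,\alpha)$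 with $i\notin\mathrm{fix}_{(\alpha_i,n]}(u_i,u_{i+1})$ for all $i\in[n-1]$, and $\widetilde{\mathrm{wt}}^n_\alpha(u_1,\dots,u_n)(x_1,\dots,x_{n-1};\mathbf y)=\prod_{i\in[n-1]}\prod_{j\in\mathrm{fix}_{(\alpha_i,n]}(u_i,u_{i+1})\cap[a,i]}(x_i-y_j)$. *)

(* Defs.v *)
From mathcomp Require Import all_boot all_order all_algebra.
Set Implicit Arguments. Unset Strict Implicit. Unset Printing Implicit Defensive.
Import Order.TTheory GRing.Theory Num.Theory.
Local Open Scope ring_scope.

Definition irange (lo hi : int) : seq int :=
  if lo <= hi then [seq lo + (k%:Z) | k <- iota 0 (absz (hi - lo)).+1] else [::].

Definition inZ (lo hi t : int) : bool := (lo <= t) && (t <= hi).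

Definition supported_in (u : int -> int) (lo hi : int) : Prop :=
  forall t, ~~ inZ lo hi t -> u t = t.

Definition in_S (a n : int) (u : int -> int) : Prop :=
  bijective u /\ supported_in u a n.

Definition tau (i j t : int) : int := if t == i then j else if t == j then i else t.
Definition rmul_tau (u : int -> int) (i j : int) : int -> int := fun t => u (tau i j t).

Definition inv_on (lo hi : int) (u : int -> int) : nat :=
  count (fun st : int * int => (st.1 < st.2) && (u st.2 < u st.1))
        [seq (s, t) | s <- irange lo hi, t <- irange lo hi].

(* l(u) = l : the number of inversions of the finitely supported permutation u
   is l (counted on any window containing the support of u) *)
Definition length_is (u : int -> int) (l : nat) : Prop :=
  exists lo hi, supported_in u lo hi /\ inv_on lo hi u = l.

Definition kcover_via (k : int) (u v : int -> int) (i j : int) : Prop :=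
  [/\ i <= k, k < j, v = rmul_tau u i j &
      exists l : nat, length_is u l /\ length_is v l.+1].

Definition karrow (k : int) (u w : int -> int) : Prop :=
  exists (s : nat) (vs : nat -> int -> int) (iss jss : nat -> int),
    [/\ (0 < s)%N, vs 0%N = u, vs s.-1 = w,
        (forall t : nat, (t.+1 < s)%N -> kcover_via k (vs t) (vs t.+1) (iss t) (jss t)) &
        (forall t : nat, (t.+2 < s)%N -> vs t (iss t) < vs t.+1 (iss t.+1))].

Definition fixb (lo hi : int) (u v : int -> int) (x : int) : bool :=
  has (fun t => (u t == v t) && (u t == x)) (irange (lo + 1) hi).

(* The order of the north/east boundary edges: top edges of columns a..0,
   then (top edge of column r, right edge of row r) for r = 1..n. *)
Definition bnd_order (gN gE : int -> option int) (a n : int) : seq (option int) :=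
  map gN (irange a 0) ++ flatten [seq [:: gN r; gE r] | r <- irange 1 n].

Definition boundary_ok (a n : int) (gN gE gS gW : int -> option int) : Prop :=
  [/\ (forall c, inZ a n c -> gS c != None),
      (forall r, inZ 1 n r -> gW r = None),
      (forall r, inZ 1 n r -> gN r != None),
      pmap id (bnd_order gN gE a n) = irange a n &
      perm_eq (pmap gS (irange a n)) (irange a n)].

Definition pcol (gN : int -> option int) (c : int) : int := odflt 0 (gN c).
Definition alpha (gN : int -> option int) (i : int) : int := pcol gN (i + 1) - 1.

(* iota_r : delete the values r+1..n from the one-line notation [W(a),...,W(n)] *)
Definition iota_del (a n r : int) (W : int -> int) (l : int) : int :=
  if inZ a r l then nth 0 [seq x <- map W (irange a n) | x <= r] (absz (l - a)) else l.

Definition W_ok (a n : int) (gN : int -> option int) (W : int -> int) : Prop :=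
  [/\ in_S a n W,
      (forall j, inZ 2 n j -> W (pcol gN j) = j),
      (forall l, inZ a (pcol gN 1) l -> gN (iota_del a n 1 W l) = Some l) &
      (forall s t, pcol gN 1 < s -> s < t -> t <= 1 ->
                   iota_del a n 1 W t < iota_del a n 1 W s)].

Definition U_ok (a n : int) (gS : int -> option int) (U : int -> int) : Prop :=
  in_S a n U /\ (forall l, inZ a n l -> gS (U l) = Some l).

(* (u_1,...,u_n) in Ctilde(U, W, alpha), the tuple given as i |-> uu i *)
Definition Ctilde (a n : int) (gN : int -> option int) (U W : int -> int)
    (uu : int -> int -> int) : Prop :=
  [/\ uu 1 = U, uu n = W &
      forall i, inZ 1 (n - 1) i ->
        karrow (alpha gN i) (uu i) (uu (i + 1)) /\
        ~~ fixb (alpha gN i) n (uu i) (uu (i + 1)) i].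

(* wt~^n_alpha(u_1..u_n)(x;y), evaluated at arbitrary values in a comm. ring *)
Definition wt (R : comNzRingType) (a n : int) (gN : int -> option int)
    (uu : int -> int -> int) (x y : int -> R) : R :=
  \prod_(i <- irange 1 (n - 1))
     \prod_(j <- irange a i | fixb (alpha gN i) n (uu i) (uu (i + 1)) j) (x i - y j).

(* Main.v *)
Require Import Defs.
From mathcomp Require Import all_boot all_order all_algebra zify.
Set Implicit Arguments. Unset Strict Implicit. Unset Printing Implicit Defensive.
Import Order.TTheory GRing.Theory Num.Theory.
Local Open Scope ring_scope.

Definition ir (lo : int) (m : nat) : seq int := [seq lo + k%:Z | k <- iota 0 m].

Lemma irangeE (lo hi : int) : lo <= hi + 1 -> irange lo hi = ir lo (absz (hi - lo + 1)).
Proof.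
rewrite /irange /ir => h; case: ifP => h2.
  by congr map; congr iota; lia.
have -> : absz (hi - lo + 1) = 0%N by lia.
by [].
Qed.

Lemma irange_nil (lo hi : int) : hi < lo -> irange lo hi = [::].
Proof. by rewrite /irange; case: ifP => //; lia. Qed.

Lemma irD (lo : int) m1 m2 : ir lo (m1 + m2) = ir lo m1 ++ ir (lo + m1%:Z) m2.
Proof.
rewrite /ir iotaD map_cat add0n; congr cat.
rewrite -{1}(addn0 m1) iotaDl -map_comp; apply: eq_map => k /=; lia.
Qed.

Lemma mem_irange (lo hi x : int) : (x \in irange lo hi) = (lo <= x <= hi).
Proof.
rewrite /irange; case: ifP => h.
  apply/mapP/idP.
    by case=> k; rewrite mem_iota => /andP[_ hk] ->; lia.
  move=> hx; exists (absz (x - lo)); first by rewrite mem_iota; lia.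
  lia.
by rewrite in_nil; lia.
Qed.

Lemma uniq_irange (lo hi : int) : uniq (irange lo hi).
Proof.
rewrite /irange; case: ifP => // _; rewrite map_inj_uniq ?iota_uniq //.
by move=> k1 k2 /addrI [].
Qed.

Lemma irange_split (lo c hi : int) : lo <= c <= hi + 1 ->
  irange lo hi = irange lo (c - 1) ++ irange c hi.
Proof.
move=> /andP[h1 h2].
rewrite (irangeE (_ : lo <= hi + 1)); last by lia.
rewrite (irangeE (_ : lo <= c - 1 + 1)); last by lia.
rewrite (irangeE (_ : c <= hi + 1)); last by lia.
have -> : absz (hi - lo + 1) = addn (absz (c - 1 - lo + 1)) (absz (hi - c + 1)) by lia.
rewrite irD; congr (_ ++ ir _ _); lia.
Qed.

Lemma irange_cons (lo hi : int) : lo <= hi -> irange lo hi = lo :: irange (lo + 1) hi.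
Proof.
move=> h; rewrite (@irange_split lo (lo + 1) hi); last by lia.
rewrite (irangeE (_ : lo <= lo + 1 - 1 + 1)); last by lia.
have -> : absz (lo + 1 - 1 - lo + 1) = 1%N by lia.
by rewrite /ir /= addr0.
Qed.

Lemma irange_mid (lo c hi : int) : lo <= c <= hi ->
  irange lo hi = irange lo (c - 1) ++ c :: irange (c + 1) hi.
Proof.
move=> h; rewrite (@irange_split lo c hi); last by lia.
by rewrite (@irange_cons c hi) //; lia.
Qed.

Lemma size_irange (lo hi : int) : lo <= hi + 1 -> size (irange lo hi) = absz (hi - lo + 1).
Proof. by move=> h; rewrite irangeE // /ir size_map size_iota. Qed.

Lemma nth_irange (lo hi : int) k : (k < size (irange lo hi))%N -> nth 0 (irange lo hi) k = lo + k%:Z.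
Proof.
rewrite /irange; case: ifP => // _; rewrite size_map size_iota => hk.
by rewrite (nth_map 0%N) ?size_iota // nth_iota // add0n.
Qed.

Definition F (I : seq int) (w : int -> int) : nat :=
  \big[addn/0%N]_(x <- I) \big[addn/0%N]_(y <- I) nat_of_bool ((x < y) && (w y < w x)).

Lemma inv_onE lo hi w : inv_on lo hi w = F (irange lo hi) w.
Proof.
rewrite /inv_on /F -sum1_count big_mkcond big_allpairs.
apply: eq_bigr => x _; apply: eq_bigr => y _ /=; by case: ifP.
Qed.

Lemma eq_F I u v : {in I, u =1 v} -> F I u = F I v.
Proof.
move=> h; rewrite /F; apply: eq_big_seq => x hx; apply: eq_big_seq => y hy.
by rewrite !h.
Qed.

Lemma sum_sub (I J : seq int) (h : int -> nat) : uniq I -> uniq J ->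
  {subset I <= J} -> (forall x, x \in J -> x \notin I -> h x = 0%N) ->
  \big[addn/0%N]_(x <- J) h x = \big[addn/0%N]_(x <- I) h x.
Proof.
move=> uI uJ sIJ h0; rewrite (bigID (mem I)) /=.
rewrite [X in (_ + X)%N]big1_seq ?addn0; last by move=> x /andP[hn hx]; apply: h0.
rewrite -big_filter; apply: perm_big; apply: uniq_perm; rewrite ?filter_uniq //.
by move=> x; rewrite mem_filter; case hx: (x \in I) => //=; rewrite sIJ.
Qed.

Lemma maps_into u lo hi x : injective u -> supported_in u lo hi ->
  inZ lo hi x -> inZ lo hi (u x).
Proof.
move=> iu su hx; apply/negPn/negP => hn.
have := su _ hn => /iu e; by move: hn; rewrite e hx.
Qed.

Lemma no_inv_out u lo hi x y : injective u -> supported_in u lo hi ->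
  x < y -> u y < u x -> inZ lo hi x && inZ lo hi y.
Proof.
move=> iu su hxy hu.
have hm := maps_into iu su.
case hx: (inZ lo hi x); case hy: (inZ lo hi y) => //=.
- have e := su y (negbT hy); have := hm _ hx.
  move: hx hy hxy hu; rewrite /inZ e; lia.
- have e := su x (negbT hx); have := hm _ hy.
  move: hx hy hxy hu; rewrite /inZ e; lia.
- have e := su x (negbT hx); have e' := su y (negbT hy).
  move: hxy hu; rewrite e e'; lia.
Qed.

Lemma F_window u lo hi lo' hi' : injective u -> supported_in u lo hi ->
  lo' <= lo -> hi <= hi' -> F (irange lo' hi') u = F (irange lo hi) u.
Proof.
move=> iu su h1 h2; rewrite /F.
have sub : {subset irange lo hi <= irange lo' hi'}.
  by move=> x; rewrite !mem_irange; lia.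
rewrite (@sum_sub (irange lo hi)) ?uniq_irange //; last first.
  move=> x _ hx; apply: big1_seq => y _.
  case: ((x < y) && _) / andP => //= [[hxy hu]].
  by move: (no_inv_out iu su hxy hu) hx; rewrite mem_irange /inZ => /andP[->].
apply: eq_big_seq => x hx.
apply: sum_sub; rewrite ?uniq_irange //.
move=> y _ hy; case: ((x < y) && _) / andP => //= [[hxy hu]].
by move: (no_inv_out iu su hxy hu) hy; rewrite mem_irange /inZ => /andP[_ ->].
Qed.

Lemma percase (a b c wa wb wc : int) : a < b -> wa < wb -> c != a -> c != b ->
  leq (addn (addn (addn (nat_of_bool ((a < c) && (wc < wa))) (nat_of_bool ((b < c) && (wc < wb))))
   (nat_of_bool ((c < a) && (wa < wc)))) (nat_of_bool ((c < b) && (wb < wc))))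
   (addn (addn (addn (nat_of_bool ((a < c) && (wc < wb))) (nat_of_bool ((b < c) && (wc < wa))))
   (nat_of_bool ((c < a) && (wb < wc)))) (nat_of_bool ((c < b) && (wa < wc)))).
Proof.
move=> h1 h2 h3 h4.
case: (boolP (a < c)) => ?; case: (boolP (b < c)) => ?; case: (boolP (c < a)) => ?;
case: (boolP (c < b)) => ? //=; try lia;
case: (boolP (wc < wa)) => ?; case: (boolP (wc < wb)) => ?;
case: (boolP (wa < wc)) => ?; case: (boolP (wb < wc)) => ? //=; lia.
Qed.

Lemma sum_split2 (I : seq int) (a b : int) (h : int -> nat) :
  uniq I -> a \in I -> b \in I -> a != b ->
  \big[addn/0%N]_(x <- I) h x =
  addn (addn (h a) (h b)) (\big[addn/0%N]_(x <- I | (x != a) && (x != b)) h x).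
Proof.
move=> uI aI bI ab.
rewrite (bigD1_seq a) //= -big_filter (bigD1_seq b) ?filter_uniq //; last first.
  by rewrite mem_filter bI eq_sym ab.
by rewrite big_filter_cond addnA.
Qed.

Lemma tau_a a b : tau a b a = b. Proof. by rewrite /tau eqxx. Qed.
Lemma tau_b a b : a != b -> tau a b b = a.
Proof. by move=> h; rewrite /tau eq_sym (negbTE h) eqxx. Qed.
Lemma tau_c a b c : c != a -> c != b -> tau a b c = c.
Proof. by move=> h1 h2; rewrite /tau (negbTE h1) (negbTE h2). Qed.

Lemma F_tau I w a b : uniq I -> a \in I -> b \in I -> a < b -> w a < w b ->
  (F I w < F I (fun x => w (tau a b x)))%N.
Proof.
move=> uI aI bI ab wab.
have nab : a != b by rewrite lt_eqF.
set P := fun x : int => (x != a) && (x != b).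
have dec : forall G : int -> int -> nat,
  \big[addn/0%N]_(x <- I) \big[addn/0%N]_(y <- I) G x y =
  addn (addn (addn (addn (G a a) (G a b)) (\big[addn/0%N]_(y <- I | P y) G a y))
             (addn (addn (G b a) (G b b)) (\big[addn/0%N]_(y <- I | P y) G b y)))
       (addn (addn (\big[addn/0%N]_(x <- I | P x) G x a) (\big[addn/0%N]_(x <- I | P x) G x b))
             (\big[addn/0%N]_(x <- I | P x) \big[addn/0%N]_(y <- I | P y) G x y)).
  move=> G; rewrite (sum_split2 _ uI aI bI nab) !(sum_split2 (G a) uI aI bI nab).
  rewrite !(sum_split2 (G b) uI aI bI nab); congr addn.
  rewrite -!big_split /=; apply: eq_bigr => x _.
  by rewrite (sum_split2 (G x) uI aI bI nab).
rewrite /F !dec.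
have eqin : \big[addn/0%N]_(x <- I | P x) \big[addn/0%N]_(y <- I | P y)
    nat_of_bool ((x < y) && (w y < w x)) =
  \big[addn/0%N]_(x <- I | P x) \big[addn/0%N]_(y <- I | P y)
    nat_of_bool ((x < y) && (w (tau a b y) < w (tau a b x))).
  apply: eq_bigr => x /andP[xa xb]; apply: eq_bigr => y /andP[ya yb].
  by rewrite !tau_c.
rewrite !tau_a !(tau_b nab) ltxx ?andbF ?andFb.
rewrite (lt_gtF ab) ab wab (lt_gtF wab) !ltxx /=.
have key : leq
  (addn (addn (addn (\big[addn/0%N]_(y <- I | P y) nat_of_bool ((a < y) && (w y < w a)))
    (\big[addn/0%N]_(y <- I | P y) nat_of_bool ((b < y) && (w y < w b))))
    (\big[addn/0%N]_(x <- I | P x) nat_of_bool ((x < a) && (w a < w x))))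
    (\big[addn/0%N]_(x <- I | P x) nat_of_bool ((x < b) && (w b < w x))))
  (addn (addn (addn (\big[addn/0%N]_(y <- I | P y) nat_of_bool ((a < y) && (w (tau a b y) < w b)))
    (\big[addn/0%N]_(y <- I | P y) nat_of_bool ((b < y) && (w (tau a b y) < w a))))
    (\big[addn/0%N]_(x <- I | P x) nat_of_bool ((x < a) && (w b < w (tau a b x)))))
    (\big[addn/0%N]_(x <- I | P x) nat_of_bool ((x < b) && (w a < w (tau a b x))))).
  rewrite -!big_split /=; apply: leq_sum => c /andP[ca cb].
  rewrite !tau_c //; exact: percase.
have fin : forall x1 x2 x3 x4 y1 y2 y3 y4 e e' : nat, e = e' ->
  leq (addn (addn (addn x1 x2) x3) x4) (addn (addn (addn y1 y2) y3) y4) ->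
  leq (addn (addn (addn 0 0) x1) (addn (addn 0 0) x2) + addn (addn x3 x4) e).+1
      (addn (addn (addn 0 1) y1) (addn (addn 0 0) y2) + addn (addn y3 y4) e').
  move=> *; lia.
exact: fin eqin key.
Qed.

Lemma tauK i j : involutive (tau i j).
Proof.
move=> x; rewrite /tau; case: (eqVneq x i) => [->|hi]; first by rewrite eqxx; case: eqVneq.
case: (eqVneq x j) => [->|hj]; first by rewrite eqxx.
by rewrite (negbTE hi) (negbTE hj).
Qed.

Lemma rmul_inj u i j : injective u -> injective (rmul_tau u i j).
Proof. move=> iu x y /iu; exact: (can_inj (tauK i j)). Qed.

Lemma rmul_bij u i j : bijective u -> bijective (rmul_tau u i j).
Proof.
move=> bu; apply: bij_comp => //; exact: (inv_bij (tauK i j)).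
Qed.

Lemma lower3 (x y z : int) : exists m, [/\ m <= x, m <= y & m <= z].
Proof. exists (- ((absz x)%:Z + (absz y)%:Z + (absz z)%:Z)); split; lia. Qed.
Lemma upper3 (x y z : int) : exists m, [/\ x <= m, y <= m & z <= m].
Proof. exists ((absz x)%:Z + (absz y)%:Z + (absz z)%:Z); split; lia. Qed.

Lemma cover_lt k u v i j : injective u -> kcover_via k u v i j -> u i < u j.
Proof.
move=> iu [hik hkj ev [l [[lo1 [hi1 [su e1]]] [lo2 [hi2 [sv e2]]]]]].
have iv : injective v by rewrite ev; exact: rmul_inj.
have [lo [l1 l2 l3]] := lower3 lo1 lo2 i.
have [hi [h1 h2 h3]] := upper3 hi1 hi2 j.
have Eu : F (irange lo hi) u = l by rewrite (F_window iu su) // -inv_onE.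
have Ev : F (irange lo hi) v = l.+1 by rewrite (F_window iv sv) // -inv_onE.
have iI : i \in irange lo hi by rewrite mem_irange; lia.
have jI : j \in irange lo hi by rewrite mem_irange; lia.
have ij : i < j by lia.
case: (ltgtP (u i) (u j)) => // [hlt|heq]; last first.
  by move/iu: heq => e; move: ij; rewrite e ltxx.
have vv : v i < v j by rewrite ev /rmul_tau tau_a tau_b ?lt_eqF.
have := F_tau (uniq_irange lo hi) iI jI ij vv.
rewrite Ev (_ : F (irange lo hi) (fun x => v (tau i j x)) = F (irange lo hi) u) ?Eu; first lia.
by rewrite -Eu; apply: eq_F => x _; rewrite ev /rmul_tau tauK.
Qed.

Lemma cover_step k v v' i j : bijective v -> kcover_via k v v' i j ->
  [/\ bijective v', (forall x, x <= k -> v x <= v' x),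
      (forall x, k < x -> v' x <= v x) &
      (forall x, k < x -> v' x != v x -> exists2 y, y <= k & v' x < v' y)].
Proof.
move=> bv cov; have lt := cover_lt (bij_inj bv) cov.
case: cov => hik hkj ev _; subst v'.
have nij : i != j by apply/eqP => e; move: hik hkj; rewrite e; lia.
split.
- exact: rmul_bij.
- move=> x hx; rewrite /rmul_tau; case: (eqVneq x i) => [->|xi].
    by rewrite tau_a ltW.
  by rewrite tau_c //; apply/eqP => e; move: hx hkj; rewrite e; lia.
- move=> x hx; rewrite /rmul_tau; case: (eqVneq x j) => [->|xj].
    by rewrite tau_b // ltW.
  by rewrite tau_c //; apply/eqP => e; move: hx hik; rewrite e; lia.
- move=> x hx; rewrite /rmul_tau; case: (eqVneq x j) => [->|xj].
    by move=> _; exists i => //; rewrite tau_b // tau_a.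
  by rewrite tau_c ?eqxx //; apply/eqP => e; move: hx hik; rewrite e; lia.
Qed.

Lemma karrow_props k u w : bijective u -> karrow k u w ->
 [/\ bijective w, (forall x, x <= k -> u x <= w x), (forall x, k < x -> w x <= u x) &
     (forall x, k < x -> w x != u x -> exists2 y, y <= k & w x < w y)].
Proof.
move=> bu [s [vs [iss [jss [hs e0 es hc _]]]]].
suff H : forall t, (t < s)%N ->
  [/\ bijective (vs t), (forall x, x <= k -> u x <= vs t x),
      (forall x, k < x -> vs t x <= u x) &
      (forall x, k < x -> vs t x != u x -> exists2 y, y <= k & vs t x < vs t y)].
  by rewrite -es; apply: H; rewrite prednK.
elim=> [|t IH] ht.
  by rewrite e0; split => // x _; rewrite ?eqxx.
have [bt l1 r1 p1] := IH (ltnW ht).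
have [bt' l2 r2 p2] := cover_step bt (hc t ht).
split => //.
- by move=> x hx; apply: le_trans (l1 _ hx) (l2 _ hx).
- by move=> x hx; apply: le_trans (r2 _ hx) (r1 _ hx).
- move=> x hx hne.
  case: (eqVneq (vs t.+1 x) (vs t x)) => [e|ne]; last exact: p2.
  have [y hy hlt] : exists2 y, y <= k & vs t x < vs t y.
    by apply: p1 => //; rewrite -e.
  by exists y => //; rewrite e; apply: lt_le_trans hlt (l2 _ hy).
Qed.

Lemma sorted_irange lo hi : sorted (fun x y : int => x < y) (irange lo hi).
Proof.
rewrite /irange; case: ifP => // _.
apply: (homo_sorted (e := ltn)) (iota_ltn_sorted _ _) => x y h /=; lia.
Qed.

Lemma sorted_lt_mid (s1 s2 : seq int) y x :
  sorted (fun x y : int => x < y) (s1 ++ y :: s2) -> x \in s1 -> x < y.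
Proof.
elim: s1 => // z s1 IH /= hp; rewrite in_cons => /orP[/eqP ->|hx].
  move: hp; rewrite path_sortedE; last by move=> ? ? ?; apply: lt_trans.
  by case/andP => /allP h _; apply: h; rewrite mem_cat in_cons eqxx orbT.
by apply: IH hx; apply: path_sorted hp.
Qed.

Section B.
Variables (gN gE : int -> option int) (a n : int).
Hypotheses (ha : a <= 0) (hn : 0 < n)
  (Hb : pmap id (bnd_order gN gE a n) = irange a n).

Definition seg r : seq (option int) := if r <= 0 then [:: gN r] else [:: gN r; gE r].

Lemma bndE : bnd_order gN gE a n = flatten [seq seg r | r <- irange a n].
Proof.
rewrite /bnd_order (@irange_split a 1 n); last by lia.
rewrite map_cat flatten_cat; congr cat.
  have : all (fun r => r <= 0) (irange a (1 - 1)).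
    by apply/allP => x; rewrite mem_irange; lia.
  elim: (irange a (1 - 1)) => //= r s IH /andP[hr hs].
  by rewrite /seg hr /= IH.
congr flatten; apply/eq_in_map => r; rewrite mem_irange /seg => h.
by rewrite lt_geF //; lia.
Qed.

Lemma gN_sorted c c' x y : a <= c -> c < c' -> c' <= n ->
  gN c = Some x -> gN c' = Some y -> x < y.
Proof.
move=> h1 h2 h3 ex ey.
have := sorted_irange a n; rewrite -Hb bndE (@irange_mid a c' n); last by lia.
rewrite map_cat flatten_cat /= pmap_cat.
have -> : seg c' = gN c' :: behead (seg c') by rewrite /seg; case: ifP.
rewrite /= ey /= => hs; apply: (sorted_lt_mid hs).
rewrite mem_pmap map_id; apply/flatten_mapP; exists c.
  by rewrite mem_irange; lia.
by rewrite /seg; case: ifP; rewrite ex in_cons eqxx.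
Qed.

Lemma gN_mem c x : a <= c <= n -> gN c = Some x -> a <= x <= n.
Proof.
move=> hc ex; rewrite -mem_irange -Hb mem_pmap map_id bndE.
apply/flatten_mapP; exists c; first by rewrite mem_irange.
by rewrite /seg; case: ifP; rewrite ex in_cons eqxx.
Qed.

Lemma p1_le1 x : gN 1 = Some x -> x <= 1.
Proof.
move=> ex; move: Hb; rewrite /bnd_order (@irange_cons 1 n); last by lia.
rewrite /= ex /= pmap_cat /= => e.
set K := size (pmap id (map gN (irange a 0))).
have hK : leq K (absz (0 - a + 1)).
  by rewrite /K size_pmap -(size_irange (_ : a <= 0 + 1)); [apply: leq_trans (count_size _ _) _; rewrite size_map | lia].
have hsz : (K < size (irange a n))%N by rewrite -e size_cat /= -/K; lia.
have := nth_irange hsz; rewrite -e nth_cat ltnn subnn /= => ->; lia.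
Qed.

End B.

Lemma mono_int (g : int -> int) (i n : int) : i <= n ->
  (forall m, i <= m -> m < n -> g m <= g (m + 1)) -> g i <= g n.
Proof.
move=> hin hs.
have [d hd] : exists d : nat, n = i + d%:Z by exists (absz (n - i)); lia.
subst n; elim: d hs {hin} => [|d IH] hs; first by rewrite addr0.
apply: le_trans (IH _) _.
  by move=> m h1 h2; apply: hs => //; lia.
have -> : i + d.+1%:Z = (i + d%:Z) + 1 by lia.
by apply: hs; lia.
Qed.

Section Main.
Variables (a n : int) (gN gE gS gW : int -> option int) (U W : int -> int)
  (uu : int -> int -> int).
Hypotheses (ha : a <= 0) (hn : 0 < n) (Hbd : boundary_ok a n gN gE gS gW)
  (HU : U_ok a n gS U) (HW : W_ok a n gN W) (HC : Ctilde a n gN U W uu).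

Local Notation p := (pcol gN).

Lemma gNp j : 1 <= j <= n -> gN j = Some (p j).
Proof.
case: Hbd => _ _ h _ _ hj; rewrite /pcol.
by have := h j hj; case: (gN j).
Qed.

Lemma Hbnd : pmap id (bnd_order gN gE a n) = irange a n.
Proof. by case: Hbd. Qed.

Lemma p_lt j j' : 1 <= j -> j < j' -> j' <= n -> p j < p j'.
Proof.
move=> h1 h2 h3; apply: (gN_sorted ha hn Hbnd (c := j) (c' := j')) => //; try lia.
  by apply: gNp; lia.
by apply: gNp; lia.
Qed.

Lemma p_le j j' : 1 <= j -> j <= j' -> j' <= n -> p j <= p j'.
Proof.
move=> h1 h2 h3; case: (eqVneq j j') => [->//|ne].
by apply: ltW; apply: p_lt => //; lia.
Qed.

Lemma p_rng j : 1 <= j <= n -> a <= p j <= n.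
Proof. move=> hj; apply: (gN_mem ha hn Hbnd (c := j)); [lia | exact: gNp]. Qed.

Lemma p1 : p 1 <= 1.
Proof. by apply: (p1_le1 ha hn Hbnd); apply: gNp; lia. Qed.

Lemma Wbij : bijective W. Proof. by case: HW => [[]]. Qed.
Lemma Winj : injective W. Proof. exact: bij_inj Wbij. Qed.
Lemma Wsupp : supported_in W a n. Proof. by case: HW => [[]]. Qed.

Lemma W4 i t : 1 <= i <= n -> t <= n -> (forall j, i < j -> j <= n -> t < p j) ->
  W t <= i.
Proof.
move=> hi htn hp.
case ht: (inZ a n t); last first.
  by rewrite (Wsupp (negbT ht)); move: ht; rewrite /inZ; lia.
have := maps_into Winj Wsupp ht; rewrite /inZ => hw.
case: (boolP (2 <= W t)) => h2; last by lia.
case: (boolP (W t <= i)) => // hgt.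
have e : W (p (W t)) = W t by case: HW => _ h _ _; apply: h; rewrite /inZ; lia.
have et := Winj e.
have := hp (W t) (_ : i < W t) (_ : W t <= n); rewrite et ltxx.
by move=> H; exfalso; apply: notF; apply: H; lia.
Qed.

Lemma Wp j : 1 <= j <= n -> W (p j) = j.
Proof.
move=> hj; case: (eqVneq j 1) => [->|j1]; last first.
  by case: HW => _ h _ _; apply: h; rewrite /inZ; lia.
have hp1 := p1; have hr := p_rng (_ : 1 <= 1 <= n).
have hr1 : a <= p 1 <= n by apply: p_rng; lia.
have Wle : forall t, t <= p 1 -> W t <= 1.
  move=> t ht; apply: W4; try lia.
  by move=> j' h1 h2; apply: le_lt_trans ht (p_lt _ h1 h2).
have eiota : iota_del a n 1 W (p 1) = W (p 1).
  rewrite /iota_del /inZ; have -> : (a <= p 1) && (p 1 <= 1) by lia.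
  rewrite (@irange_split a (p 1 + 1) n); last by lia.
  rewrite map_cat filter_cat.
  have -> : [seq x <- [seq W i | i <- irange a (p 1 + 1 - 1)] | x <= 1] =
            [seq W i | i <- irange a (p 1 + 1 - 1)].
    apply/all_filterP/allP => x /mapP [t]; rewrite mem_irange => ht ->.
    by apply: Wle; lia.
  have hsz : (absz (p 1 - a) < size [seq W i | i <- irange a (p 1 + 1 - 1)])%N.
    by rewrite size_map size_irange; lia.
  rewrite nth_cat hsz (nth_map 0); last by rewrite size_map in hsz.
  rewrite nth_irange; first by congr W; lia.
  by rewrite size_map in hsz.
have := (match HW with And4 _ _ h _ => h end) (p 1) (_ : inZ a (p 1) (p 1)).
rewrite eiota => /(_ _) e.
have {}e : gN (W (p 1)) = Some (p 1) by apply: e; rewrite /inZ; lia.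
have hw := maps_into Winj Wsupp (_ : inZ a n (p 1)).
have {}hw : a <= W (p 1) <= n by apply: hw; rewrite /inZ; lia.
have g1 : gN 1 = Some (p 1) by apply: gNp; lia.
case: (ltgtP (W (p 1)) 1) => // h.
- by have := gN_sorted ha hn Hbnd (_ : a <= W (p 1)) h (_ : 1 <= n) e g1; rewrite ltxx => H; exfalso; apply: notF; apply: H; lia.
- by have := gN_sorted ha hn Hbnd (_ : a <= 1) h (_ : W (p 1) <= n) g1 e; rewrite ltxx => H; exfalso; apply: notF; apply: H; lia.
Qed.


Lemma uu1 : uu 1 = U. Proof. by case: HC. Qed.
Lemma uun : uu n = W. Proof. by case: HC. Qed.
Lemma chain i : 1 <= i -> i < n -> karrow (alpha gN i) (uu i) (uu (i + 1)).
Proof. by case: HC => _ _ h hi1 hi2; case: (h i) => //; rewrite /inZ; lia. Qed.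
Lemma nofix i : 1 <= i -> i < n -> ~~ fixb (alpha gN i) n (uu i) (uu (i + 1)) i.
Proof. by case: HC => _ _ h hi1 hi2; case: (h i) => //; rewrite /inZ; lia. Qed.

Lemma int_ind (P : int -> Prop) : P 1 -> (forall i, 1 <= i -> P i -> P (i + 1)) ->
  forall i, 1 <= i -> P i.
Proof.
move=> h0 hs i hi.
have [d ->] : exists d : nat, i = 1 + d%:Z by exists (absz (i - 1)); lia.
elim: d => [|d IH]; first by rewrite addr0.
have -> : 1 + d.+1%:Z = (1 + d%:Z) + 1 by lia.
by apply: hs => //; lia.
Qed.

Lemma uu_bij i : 1 <= i -> i <= n -> bijective (uu i).
Proof.
move: i; apply: int_ind => [_|i hi IH hn'].
  by rewrite uu1; case: HU => [[]].
by case: (karrow_props (IH _) (chain hi _)) => //; lia.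
Qed.

Lemma back_left i t : 1 <= i -> i <= n ->
  (forall j, i < j -> j <= n -> t < p j) -> uu i t <= W t.
Proof.
move=> h1 h2 hp; rewrite -uun.
apply: (mono_int (g := fun m => uu m t)) => // m hm1 hm2.
have hm1' : 1 <= m by lia.
have hm3 : m <= n by lia.
have [_ L _ _] := karrow_props (uu_bij hm1' hm3) (chain hm1' hm2).
apply: L; rewrite /alpha.
have := hp (m + 1) (_ : i < m + 1) (_ : m + 1 <= n); lia.
Qed.

Lemma back_right i t : 1 <= i -> i <= n -> n < t -> W t <= uu i t.
Proof.
move=> h1 h2 ht; rewrite -uun.
suff : - uu i t <= - uu n t by lia.
apply: (mono_int (g := fun m => - uu m t)) => // m hm1 hm2.
have hm1' : 1 <= m by lia.
have hm3 : m <= n by lia.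
have [_ _ R _] := karrow_props (uu_bij hm1' hm3) (chain hm1' hm2).
rewrite lerN2; apply: R; rewrite /alpha.
have := p_rng (_ : 1 <= m + 1 <= n); lia.
Qed.


Lemma fixed i : 1 <= i -> i <= n -> forall j, 1 <= j -> j < i -> uu i (p j) = j.
Proof.
move: i; apply: int_ind => [_ j h1 h2|i hi IH hin j hj1 hj2]; first by lia.
have hi' : i < n by lia.
have hin' : i <= n by lia.
set k := alpha gN i.
have [bij' L R Pv] := karrow_props (uu_bij hi hin') (chain hi hi').
have hk : k = p (i + 1) - 1 by [].
have BL : forall t, t <= k -> uu (i + 1) t <= i.
  move=> t ht; apply: le_trans (back_left _ _ _) (W4 _ _ _); try lia.
  - move=> j' h1 h2; have := p_le (_ : 1 <= i + 1) (_ : i + 1 <= j') h2; lia.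
  - have := p_rng (_ : 1 <= i + 1 <= n); lia.
  - move=> j' h1 h2; have := p_le (_ : 1 <= i + 1) (_ : i + 1 <= j') h2; lia.
case: (ltgtP j i) => hji; last 1 first.
- (* j = i *)
  subst j.
  case: bij' => g c1 c2.
  set s := g i.
  have es : uu (i + 1) s = i by rewrite /s c2.
  case: (boolP (s <= k)) => hs.
    have h1 : i <= W s by rewrite -{1}es; apply: back_left; try lia;
      move=> j' q1 q2; have := p_le (_ : 1 <= i + 1) (_ : i + 1 <= j') q2; lia.
    have h2 : W s <= i.
      apply: W4; try lia.
        have := p_rng (_ : 1 <= i + 1 <= n); lia.
      move=> j' q1 q2; have := p_le (_ : 1 <= i + 1) (_ : i + 1 <= j') q2; lia.
    have : W s = W (p i) by rewrite Wp; lia.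
    by move/Winj <-.
  exfalso.
  case: (boolP (n < s)) => hsn.
    have := back_right (_ : 1 <= i + 1) (_ : i + 1 <= n) hsn.
    rewrite es (Wsupp (_ : ~~ inZ a n s)); [lia | rewrite /inZ; lia].
  case: (eqVneq (uu (i + 1) s) (uu i s)) => e.
    have := nofix hi hi'; rewrite /fixb; move/hasP; apply.
    exists s; first by rewrite mem_irange -/k; lia.
    by rewrite -e es eqxx.
  have hks : k < s by lia.
  have [y hy hlt] := Pv s hks e.
  by have := BL y hy; rewrite es in hlt; lia.
- (* j < i *)
  have hpj : p j <= k.
    rewrite hk; have := p_lt (_ : 1 <= j) (_ : j < i + 1) (_ : i + 1 <= n); lia.
  have e1 := IH hin' j hj1 hji.
  have := L _ hpj; rewrite e1 => h1.
  have : uu (i + 1) (p j) <= W (p j).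
    apply: back_left; try lia.
    move=> j' h3 h4; have := p_lt (_ : 1 <= j) (_ : j < j') h4; lia.
  rewrite Wp; lia.
- lia.
Qed.

End Main.
Unset Implicit Arguments.
Theorem lemma4p16 (a n : int) (gN gE gS gW : int -> option int)
    (U W : int -> int) (uu : int -> int -> int) :
  a <= 0 -> 0 < n ->
  boundary_ok a n gN gE gS gW ->
  U_ok a n gS U -> W_ok a n gN W ->
  Ctilde a n gN U W uu ->
  [/\ (forall i j : int, 1 <= j -> j < i -> i <= n -> uu i (pcol gN j) = j),
      (forall i j : int, inZ 1 (n - 1) i ->
         fixb (alpha gN i) n (uu i) (uu (i + 1)) j -> inZ a i j -> j <= 0) &
      exists L : seq (int * int),
        [/\ uniq L,
            all (fun ij => inZ 1 (n - 1) ij.1 && inZ a 0 ij.2) L &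
            forall (R : comNzRingType) (y : int -> R),
              wt a n gN uu y y = \prod_(ij <- L) (y ij.1 - y ij.2)]].
Proof.
move=> ha hn Hbd HU HW HC.
have P1 : forall i j : int, 1 <= j -> j < i -> i <= n -> uu i (pcol gN j) = j.
  move=> i j h1 h2 h3; apply: (fixed ha hn Hbd HU HW HC) => //; lia.
have P2 : forall i j : int, inZ 1 (n - 1) i ->
         fixb (alpha gN i) n (uu i) (uu (i + 1)) j -> inZ a i j -> j <= 0.
  move=> i j; rewrite /inZ => hi hf hj.
  case: (boolP (j <= 0)) => // hj0; exfalso.
  have hi1 : 1 <= i by lia.
  have hin : i < n by lia.
  case: (eqVneq j i) => [eji|nji].
    by subst j; move: (nofix ha hn HC hi1 hin); rewrite hf.
  move: hf; rewrite /fixb => /hasP [t]; rewrite mem_irange => ht /andP[/eqP e1 /eqP e2].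
  have e3 := P1 i j (_ : 1 <= j) (_ : j < i) (_ : i <= n).
  have : uu i t = uu i (pcol gN j) by rewrite e2 e3 //; lia.
  move/(bij_inj (uu_bij ha hn HU HC hi1 (_ : i <= n))) => et.
  have := p_lt ha hn Hbd (_ : 1 <= j) (_ : j < i + 1) (_ : i + 1 <= n).
  rewrite -et; move: ht; rewrite /alpha; lia.
split => //.
exists [seq (i, j) | i <- irange 1 (n - 1),
         j <- [seq j <- irange a i | fixb (alpha gN i) n (uu i) (uu (i + 1)) j]].
split.
- apply: allpairs_uniq_dep; first exact: uniq_irange.
    by move=> x _; rewrite filter_uniq // uniq_irange.
  by move=> [x1 y1] [x2 y2] _ _ /= [-> ->].
- apply/allP => ij /allpairsPdep [i [j [hi hj ->]]] /=.
  move: hj; rewrite mem_filter mem_irange => /andP[hf hj].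
  move: hi; rewrite mem_irange => hi.
  have := P2 i j (_ : inZ 1 (n - 1) i) hf (_ : inZ a i j).
  rewrite /inZ; lia.
- move=> R y; rewrite /wt big_allpairs_dep /=.
  by apply: eq_bigr => i _; rewrite big_filter.
Qed.
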